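(* Let $p$ be an odd prime and let $G$ be a quasi-powerful $p$-group. For any $g,h\in G$ there exist $j\in G$ and $z\in Z(G)$ such that $g^{p}h^{p}=j^{p}z$.
   Context: For an odd prime $p$, a finite $p$-group $G$ is powerful if $[G,G]\le G^{p}$ (where $G^{p}=\langle g^p\mid g\in G\rangle$), and $G$ is quasi-powerful if $G/Z(G)$ is powerful. *)

(* Defs.v *)
From mathcomp Require Import all_boot all_fingroup all_solvable.
Set Implicit Arguments. Unset Strict Implicit. Unset Printing Implicit Defensive.
Local Open Scope group_scope.

Definition pow_subgroup (gT : finGroupType) (p : nat) (G : {set gT}) : {set gT} :=
  <<[set x ^+ p | x in G]>>.

Definition powerful (gT : finGroupType) (p : nat) (G : {set gT}) : bool :=
  [~: G, G] \subset pow_subgroup p G.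

Definition quasi_powerful (gT : finGroupType) (p : nat) (G : {group gT}) : bool :=
  powerful p (G / 'Z(G)).

(* Main.v *)
Require Import Defs.
From mathcomp Require Import all_boot all_fingroup all_solvable.
Set Implicit Arguments. Unset Strict Implicit. Unset Printing Implicit Defensive.
Local Open Scope group_scope.

Lemma mem_pw (gT : finGroupType) p (A : {set gT}) x :
  x \in A -> x ^+ p \in pow_subgroup p A.
Proof. by move=> Ax; apply: mem_gen; apply: imset_f. Qed.

Lemma pw_subG (gT : finGroupType) p (A : {set gT}) (G : {group gT}) :
  A \subset G -> pow_subgroup p A \subset G.
Proof.
move=> sAG; rewrite gen_subG; apply/subsetP=> y /imsetP [x Ax ->].
by rewrite groupX // (subsetP sAG).
Qed.

Lemma pwS (gT : finGroupType) p (A B : {set gT}) :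
  A \subset B -> pow_subgroup p A \subset pow_subgroup p B.
Proof. by move=> sAB; apply: genS; apply: imsetS. Qed.

Lemma morphim_pw (aT rT : finGroupType) (D : {group aT}) (f : {morphism D >-> rT})
   p (A : {set aT}) :
  A \subset D -> f @* pow_subgroup p A = pow_subgroup p (f @* A).
Proof.
move=> sAD; rewrite /pow_subgroup morphim_gen; last first.
  by apply/subsetP=> y /imsetP [x Ax ->]; rewrite groupX // (subsetP sAD).
congr <<_>>; rewrite !morphimEsub //; last first.
  by apply/subsetP=> y /imsetP [x Ax ->]; rewrite groupX // (subsetP sAD).
apply/setP=> y; apply/imsetP/imsetP.
  case=> u /imsetP [x Ax ->] ->; exists (f x); first by apply: imset_f.
  by rewrite morphX // (subsetP sAD).
case=> u /imsetP [x Ax ->] ->; exists (x ^+ p); first by apply: imset_f.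
by rewrite morphX // (subsetP sAD).
Qed.

Lemma norm_pw (gT : finGroupType) p (A B : {set gT}) :
  B \subset 'N(A) -> B \subset 'N(pow_subgroup p A).
Proof.
move=> nAB; apply: norms_gen; apply/subsetP=> g Bg; rewrite inE.
apply/subsetP=> y /imsetP [u /imsetP [x Ax ->] ->].
rewrite conjXg; apply: imset_f.
by rewrite -(normP (subsetP nAB g Bg)) memJ_conjg.
Qed.

Lemma pw_normal (gT : finGroupType) p (A G : {group gT}) :
  A <| G -> pow_subgroup p A <| G.
Proof.
case/andP=> sAG nAG; rewrite /normal pw_subG //; exact: norm_pw.
Qed.

Lemma pw_group_set (gT : finGroupType) p (K : {group gT}) :
  (forall a b, a \in K -> b \in K -> exists2 c, c \in K & a ^+ p * b ^+ p = c ^+ p) ->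
  forall w, w \in pow_subgroup p K -> exists2 u, u \in K & w = u ^+ p.
Proof.
move=> cl w; set S := [set x ^+ p | x in K].
have gS : group_set S.
  apply/group_setP; split; first by apply/imsetP; exists 1; rewrite ?expg1n.
  move=> _ _ /imsetP [a Ka ->] /imsetP [b Kb ->].
  by have [c Kc ->] := cl a b Ka Kb; apply: imset_f.
rewrite /pow_subgroup -/S (gen_set_id gS) => /imsetP [u Ku ->].
by exists u.
Qed.

Lemma quotient_pw (gT : finGroupType) p (A : {set gT}) (H : {group gT}) :
  A \subset 'N(H) -> pow_subgroup p A / H = pow_subgroup p (A / H).
Proof. by move=> nHA; rewrite !quotientE morphim_pw. Qed.

Lemma bin2_pow (gT : finGroupType) p (t : gT) :
  prime p -> 2 < p -> t ^+ p = 1 -> t ^+ 'C(p, 2) = 1.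
Proof.
move=> pr p2 tp; have /dvdnP [k ->] : p %| 'C(p, 2) by apply: prime_dvd_bin.
by rewrite mulnC expgM tp expg1n.
Qed.

Lemma lemA' (p : nat) : prime p -> 2 < p -> forall n (gT : finGroupType) (G : {group gT}),
  #|G| < n -> p.-group G -> [~: G, G] \subset pow_subgroup p G ->
  pow_subgroup p (pow_subgroup p G) = 1 -> pow_subgroup p G \subset 'C(G).
Proof.
move=> pr p2; elim=> // n IHn gT G leGn pG dG ppG.
have [G1 | ntG] := eqsVneq G 1.
  by apply: subset_trans (pw_subG p (subxx G)) _; rewrite G1 sub1G.
have ntZ : 'Z(G) != 1 by rewrite center_nil_eq1 // (pgroup_nil pG).
have pZ : p.-group 'Z(G) by apply: pgroupS pG; apply: center_sub.
have [_ pZd _] := pgroup_pdiv pZ ntZ.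
have [z Zz oz] := Cauchy pr pZd.
set N := <[z]>%G.
have sNZ : N \subset 'Z(G) by rewrite cycle_subG.
have nN : N <| G := sub_center_normal sNZ.
have ntN : N :!=: 1.
  by rewrite cycle_eq1; apply/eqP=> z1; move: oz; rewrite z1 order1 => p1; rewrite -p1 in pr.
have nNG : G \subset 'N(N) := normal_norm nN.
have sNG : N \subset G := normal_sub nN.
have spG : pow_subgroup p G \subset G := pw_subG p (subxx G).
have IH := IHn _ (G / N)%G.
have cQ : pow_subgroup p (G / N) \subset 'C(G / N).
  apply: IH.
  - by rewrite -ltnS; apply: leq_trans leGn; rewrite ltnS ltn_quotient.
  - exact: quotient_pgroup.
  - by rewrite -quotientR // -quotient_pw // quotientS.
  - rewrite -quotient_pw // -quotient_pw ?ppG ?quotient1 //.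
    exact: subset_trans spG nNG.
have sRN : [~: pow_subgroup p G, G] \subset N.
  rewrite -quotient_cents2 //; last exact: subset_trans spG nNG.
  by rewrite quotient_pw.
have Np : forall t, t \in N -> t ^+ p = 1.
  move=> t /cycleP [i ->]; by rewrite -expgM mulnC expgM -oz expg_order expg1n.
rewrite gen_subG; apply/subsetP=> _ /imsetP [x Gx ->]; apply/centP=> g Gg.
apply/commgP/conjg_fixP.
rewrite conjXg conjg_mulR.
set c := [~ x, g].
have Gc : c \in G by rewrite groupR.
have Pc : c \in pow_subgroup p G by apply: (subsetP dG); apply: mem_commg.
have ZR : [~ c, x] \in 'Z(G) by apply: (subsetP sNZ); apply: (subsetP sRN); apply: mem_commg.
rewrite expMg_Rmul; first last.
- exact: centerC Gx _ ZR.
- exact: centerC Gc _ ZR.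
have -> : c ^+ p = 1 by apply/set1gP; rewrite -ppG; apply: mem_pw.
rewrite bin2_pow // ?mulg1 //.
by apply: Np; apply: (subsetP sRN); apply: mem_commg.
Qed.

Lemma pw_normG (gT : finGroupType) p (G : {group gT}) :
  G \subset 'N(pow_subgroup p (pow_subgroup p G)).
Proof. exact/norm_pw/normal_norm/(pw_normal p (normal_refl G)). Qed.

Lemma lemA (p : nat) (gT : finGroupType) (G : {group gT}) :
  prime p -> 2 < p -> p.-group G -> powerful p G ->
  [~: pow_subgroup p G, G] \subset pow_subgroup p (pow_subgroup p G).
Proof.
move=> pr p2 pG dG.
set W := <<[set x ^+ p | x in pow_subgroup p G]>>%G.
have nWG : G \subset 'N(W) := pw_normG p G.
have spG : pow_subgroup p G \subset G := pw_subG p (subxx G).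
have nWp : pow_subgroup p G \subset 'N(W) := subset_trans spG nWG.
have := lemA' pr p2 (ltnSn #|(G / W)%G|) (quotient_pgroup _ pG).
rewrite -!quotient_pw // => H.
have {}H := H _ (trivg_quotient W).
rewrite -quotient_cents2 //; apply: H.
by rewrite -quotientR // quotientS.
Qed.

Lemma lemB' (p : nat) (gT : finGroupType) (G : {group gT}) :
  prime p -> 2 < p -> [~: G, G] \subset pow_subgroup p G ->
  pow_subgroup p G \subset 'C(G) -> pow_subgroup p (pow_subgroup p G) = 1 ->
  forall x y, x \in G -> y \in G -> (x * y) ^+ p = x ^+ p * y ^+ p.
Proof.
move=> pr p2 dG cG ppG x y Gx Gy.
have Pc : [~ y, x] \in pow_subgroup p G by apply: (subsetP dG); apply: mem_commg.
have Cc : [~ y, x] \in 'C(G) := subsetP cG _ Pc.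
rewrite expMg_Rmul; first last.
- exact/commute_sym/(centP Cc).
- exact/commute_sym/(centP Cc).
rewrite bin2_pow ?mulg1 //.
by apply/set1gP; rewrite -ppG; apply: mem_pw.
Qed.

Lemma lemB (p : nat) (gT : finGroupType) (G : {group gT}) :
  prime p -> 2 < p -> p.-group G -> powerful p G ->
  forall x y, x \in G -> y \in G ->
  exists2 w, w \in pow_subgroup p (pow_subgroup p G) & x ^+ p * y ^+ p = (x * y) ^+ p * w.
Proof.
move=> pr p2 pG dG x y Gx Gy.
set W := <<[set x ^+ p | x in pow_subgroup p G]>>%G.
have nWG : G \subset 'N(W) := pw_normG p G.
have spG : pow_subgroup p G \subset G := pw_subG p (subxx G).
have nWp : pow_subgroup p G \subset 'N(W) := subset_trans spG nWG.
have RW := lemA pr p2 pG dG.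
have cQ : pow_subgroup p (G / W) \subset 'C(G / W).
  by rewrite -quotient_pw //; apply: quotient_cents2r.
have dQ : [~: G / W, G / W] \subset pow_subgroup p (G / W).
  by rewrite -quotientR // -quotient_pw // quotientS.
have ppQ : pow_subgroup p (pow_subgroup p (G / W)) = 1.
  by rewrite -!quotient_pw //; exact: (trivg_quotient W).
have Nx : x \in 'N(W) := subsetP nWG x Gx.
have Ny : y \in 'N(W) := subsetP nWG y Gy.
have := lemB' pr p2 dQ cQ ppQ (mem_quotient W Gx) (mem_quotient W Gy).
rewrite -!morphX // -!morphM ?groupX ?groupM // => E.
exists (((x * y) ^+ p)^-1 * (x ^+ p * y ^+ p)); last by rewrite mulKVg.
have Nxy : x * y \in 'N(W) by apply: groupM.
have N1 : ((x * y) ^+ p)^-1 \in 'N(W) by rewrite groupV groupX.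
have N2 : x ^+ p * y ^+ p \in 'N(W) by apply: groupM; apply: groupX.
apply: coset_idr; first by apply: groupM.
by rewrite morphM // morphV ?groupX // -E morphX // mulVg.
Qed.

Lemma lemT (p : nat) : prime p -> 2 < p -> forall n (gT : finGroupType) (G : {group gT}),
  #|G| < n -> p.-group G -> powerful p G ->
  forall a b, a \in G -> b \in G -> exists2 c, c \in G & a ^+ p * b ^+ p = c ^+ p.
Proof.
move=> pr p2; elim=> // n IHn gT G leGn pG dG a b Ga Gb.
have [G1 | ntG] := eqsVneq G 1.
  move: Ga Gb; rewrite G1 => /set1gP -> /set1gP ->.
  by exists 1; rewrite ?group1 // !expg1n mulg1.
set K := <<[set x ^+ p | x in G]>>%G.
have sKG : K \subset G := pw_subG p (subxx G).
have sKPhi : K \subset 'Phi(G).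
  rewrite (Phi_joing pG) (MhoE 1 pG) expn1; exact: joing_subr.
have ltK : #|K| < #|G|.
  by apply: proper_card; apply: sub_proper_trans sKPhi (Phi_proper ntG).
have pK : p.-group K := pgroupS sKG pG.
have RK := lemA pr p2 pG dG.
have dK : powerful p K.
  by apply: subset_trans RK; apply: commgS.
have IHK : forall a b, a \in K -> b \in K ->
    exists2 c, c \in K & a ^+ p * b ^+ p = c ^+ p.
  by apply: (IHn _ K) => //; apply: leq_trans ltK _.
have wK := pw_group_set IHK.
have [w Ww Ew] := lemB pr p2 pG dG Ga Gb.
have [u Ku Eu] := wK w Ww.
set v := a * b.
have Gv : v \in G by apply: groupM.
rewrite Ew Eu -/v.
set H := <<[set v] :|: K>>%G.
have sHG : H \subset G by rewrite gen_subG subUset sub1set Gv sKG.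
have [HG | neHG] := eqVneq H G.
  have eG : 'Phi(G) <*> [set v] = G.
    apply/eqP; rewrite eqEsubset join_subG Phi_sub sub1set Gv /=.
    rewrite -{1}HG /joing genS // subUset sub1set !inE eqxx orbT /=.
    by apply: subset_trans sKPhi (subsetUl _ _).
  have cycG : <[v]> = G := Phi_nongen eG.
  have Gu : u \in G := subsetP sKG u Ku.
  have cab : commute v u.
    have := cycle_abelian v; rewrite cycG => /centsP cGG.
    exact: cGG v Gv u Gu.
  exists (v * u); first exact: groupM Gv Gu.
  by rewrite (expgMn _ cab).
have ltH : #|H| < #|G| by apply: proper_card; rewrite properEneq neHG.
set W := <<[set x ^+ p | x in K]>>%G.
have nWG : G \subset 'N(W) := pw_normG p G.
have cKW : K / W \subset 'C(G / W) by apply: quotient_cents2r.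
have dH : powerful p H.
  apply: subset_trans (pwS p (_ : K \subset H)); last first.
    by rewrite sub_gen // subsetUr.
  apply: (der1_min (subset_trans sHG nWG)).
  have nS : [set v] :|: K \subset 'N(W).
    by apply: subset_trans nWG; rewrite subUset sub1set Gv sKG.
  rewrite /= quotient_gen // abelian_gen quotientU quotient_set1; last first.
    exact: subsetP nWG v Gv.
  have Gcv : coset W v \in G / W by apply: mem_quotient.
  apply/centsP=> s Ss t St.
  case/setUP: Ss => [/set1P -> | Ks].
    case/setUP: St => [/set1P -> | Kt]; first exact: commute_refl.
    exact/commute_sym/(centP (subsetP cKW t Kt)).
  have Gt : t \in G / W.
    case/setUP: St => [/set1P -> // | Kt].
    by apply: subsetP Kt; apply: quotientS.
  exact: (centP (subsetP cKW s Ks) t Gt).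
have Hv : v \in H by apply: mem_gen; rewrite !inE eqxx.
have Hu : u \in H by apply: mem_gen; rewrite inE Ku orbT.
have [c Hc Ec] := IHn _ H (leq_trans ltH leGn) (pgroupS sHG pG) dH v u Hv Hu.
by exists c => //; apply: subsetP Hc.
Qed.

Theorem lemma3p4 (gT : finGroupType) (p : nat) (G : {group gT}) :
  prime p -> odd p -> p.-group G -> quasi_powerful p G ->
  forall g h, g \in G -> h \in G ->
  exists j, exists z, [/\ j \in G, z \in 'Z(G) & g ^+ p * h ^+ p = j ^+ p * z].
Proof.
move=> pr op pG qp g h Gg Gh.
have p2 := odd_prime_gt2 op pr.
have nZ : G \subset 'N('Z(G)) := normal_norm (center_normal G).
have pQ : p.-group (G / 'Z(G))%G := quotient_pgroup _ pG.
have [C QC EC] := lemT pr p2 (ltnSn _) pQ qp (mem_quotient _ Gg) (mem_quotient _ Gh).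
case/morphimP: QC => j Nj Gj EC'; rewrite EC' in EC.
have Ng := subsetP nZ g Gg; have Nh := subsetP nZ h Gh.
have N1 : (j ^+ p)^-1 \in 'N('Z(G)) by rewrite groupV groupX.
have N2 : g ^+ p * h ^+ p \in 'N('Z(G)) by apply: groupM; apply: groupX.
exists j, ((j ^+ p)^-1 * (g ^+ p * h ^+ p)); split => //; last by rewrite mulKVg.
apply: coset_idr; first by apply: groupM.
rewrite morphM // morphV ?groupX // !morphM ?groupX // !morphX //.
by rewrite EC mulVg.
Qed.
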